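(* Let $f,g$ be complex-valued functions of two variables with $f\perp g$. Let $\{a_i\}_{i\in\mathbb{Z}},\{b_i\}_{i\in\mathbb{Z}},\{c_i\}_{i\in\mathbb{Z}},\{d_i\}_{i\in\mathbb{Z}}$ be sequences, and let $m,n\ge 0$ be integers such that $f(a_j,c_j),f(a_j,d_j),g(b_j,c_j),g(b_j,d_j)$ are all nonzero for $-n\le j\le m$. Then $$\sum_{k=-n}^{m} f(a_k,b_k)g(c_k,d_k)\frac{\prod_{j=1}^{k-1}f(a_j,c_j)}{\prod_{j=1}^{k}f(a_j,d_j)}\frac{\prod_{j=1}^{k-1}g(b_j,d_j)}{\prod_{j=1}^{k}g(b_j,c_j)} =\frac{\prod_{j=1}^{m}f(a_j,c_j)}{\prod_{j=1}^{m}f(a_j,d_j)}\frac{\prod_{j=1}^{m}g(b_j,d_j)}{\prod_{j=1}^{m}g(b_j,c_j)}-\frac{\prod_{j=-n}^{0}f(a_j,d_j)}{\prod_{j=-n}^{0}f(a_j,c_j)}\frac{\prod_{j=-n}^{0}g(b_j,c_j)}{\prod_{j=-n}^{0}g(b_j,d_j)}.$$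
   Context: $f\perp g$ means $g(u,v)f(z,w)-g(u,w)f(z,v)+g(v,w)f(z,u)=0$ for all $u,v,w,z$. Products over integer ranges follow the convention: $\prod_{j=k}^{m}A_j=A_kA_{k+1}\cdots A_m$ if $m\ge k$; $=1$ if $m=k-1$; $=(A_{m+1}A_{m+2}\cdots A_{k-1})^{-1}$ if $m\le k-2$. *)

(* Defs.v *)
From mathcomp Require Import all_boot all_order all_algebra.
From mathcomp Require Import reals.
From mathcomp.real_closed Require Import complex.
Set Implicit Arguments. Unset Strict Implicit. Unset Printing Implicit Defensive.
Import Order.TTheory GRing.Theory Num.Theory.
Local Open Scope ring_scope.

Definition perp (F : pzRingType) (f g : F -> F -> F) : Prop :=
  forall u v w z : F, g u v * f z w - g u w * f z v + g v w * f z u = 0.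

(* Product over an integer range with the paper's convention:
   zprod A k m = A_k ... A_m        if m >= k,
               = 1                   if m = k - 1,
               = (A_(m+1) ... A_(k-1))^-1 if m <= k - 2. *)
Definition zprod (F : unitRingType) (A : int -> F) (k m : int) : F :=
  if k - 1 <= m then \prod_(i < absz (m - k + 1)%R) A (k + i%:Z)
  else (\prod_(i < absz (k - 1 - m)%R) A (m + 1 + i%:Z))^-1.

(* Sum over the integer range lo..hi (lo <= hi + 1 expected) *)
Definition zsum (F : nmodType) (A : int -> F) (lo hi : int) : F :=
  \sum_(i < absz (hi - lo + 1)%R) A (lo + i%:Z).

(* Main.v *)
Require Import Defs.
From mathcomp Require Import all_boot all_order all_algebra.
From mathcomp Require Import reals.
From mathcomp.real_closed Require Import complex.
From mathcomp Require Import zify ring.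
Import Order.TTheory GRing.Theory Num.Theory.
Local Open Scope ring_scope.

Lemma zprod_pos (F : fieldType) (A : int -> F) (p : nat) :
  zprod A 1 (Posz p) = \prod_(i < p) A (1 + i%:Z).
Proof.
rewrite /zprod; destruct (Order.le _ _) eqn:H; last by exfalso; move: H; lia.
have E : forall q (e : q = p), \prod_(i < q) A (1 + i%:Z) = \prod_(i < p) A (1 + i%:Z) by move=> q ->.
apply: E; lia.
Qed.

Lemma zprod_neg (F : fieldType) (A : int -> F) (p : nat) :
  zprod A 1 (Negz p) = (\prod_(i < p.+1) A (Negz p + 1 + i%:Z))^-1.
Proof.
rewrite /zprod; destruct (Order.le _ _) eqn:H; first by exfalso; move: H; lia.
have E : forall q (e : q = p.+1), \prod_(i < q) A (Negz p + 1 + i%:Z) = \prod_(i < p.+1) A (Negz p + 1 + i%:Z) by move=> q ->.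
congr (_^-1); apply: E; lia.
Qed.

Lemma zprod_recr (F : fieldType) (A : int -> F) (k : int) :
  A k != 0 -> zprod A 1 k = zprod A 1 (k - 1) * A k.
Proof.
case: k => [[|p]|p] Ak.
- rewrite zprod_pos (_ : Posz 0 - 1 = Negz 0) // zprod_neg big_ord0 big_ord1.
  by rewrite mulVf.
- rewrite (_ : Posz p.+1 - 1 = Posz p); last by lia.
  rewrite !zprod_pos big_ord_recr /=; congr (_ * A _); lia.
- rewrite (_ : Negz p - 1 = Negz p.+1); last by lia.
  rewrite !zprod_neg [in RHS]big_ord_recl invfM mulrAC.
  rewrite (_ : Negz p.+1 + 1 + 0%:Z = Negz p); last by lia.
  rewrite mulVf // mul1r; congr (_^-1); apply: eq_bigr => i _; congr (A _).
  rewrite lift0; lia.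
Qed.

Lemma zsum_tele (V : zmodType) (T P : int -> V) (lo : int) (N : nat) :
  (forall i : nat, (i < N)%N -> T (lo + i%:Z) = P (lo + i%:Z) - P (lo + i%:Z - 1)) ->
  \sum_(i < N) T (lo + i%:Z) = P (lo + N%:Z - 1) - P (lo - 1).
Proof.
move=> H.
rewrite (eq_bigr (fun i : 'I_N => P (lo - 1 + (nat_of_ord i).+1%:Z) - P (lo - 1 + (nat_of_ord i)%:Z))); last first.
  move=> i _; rewrite H //.
  by congr (P _ - P _); lia.
rewrite -(big_mkord xpredT (fun i => P (lo - 1 + i.+1%:Z) - P (lo - 1 + i%:Z))).
rewrite (telescope_sumr (fun i => P (lo - 1 + i%:Z))) //.
by congr (P _ - P _); lia.
Qed.

Lemma alg (F : fieldType) (x y z w fc fd gc gd : F) : fd != 0 -> gc != 0 ->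
  (fc * gd - fd * gc) * (x / (y * fd)) * (z / (w * gc))
  = (x * fc) / (y * fd) * ((z * gd) / (w * gc)) - x / y * (z / w).
Proof.
move=> Hd Hc; rewrite !invfM.
move: (mulfV Hd) (mulfV Hc); move: (fd^-1) (gc^-1) => u v e1 e2.
apply/eqP; rewrite -subr_eq0.
rewrite (_ : _ - _ = x * y^-1 * z * w^-1 * (1 - (fd * u) * (gc * v))); last by ring.
by rewrite e1 e2 mulr1 subrr mulr0.
Qed.

Lemma zprod_0 (F : fieldType) (A : int -> F) (n : nat) :
  zprod A (- (n%:Z)) 0 = \prod_(i < n.+1) A (- (n%:Z) + i%:Z).
Proof.
rewrite /zprod; destruct (Order.le _ _) eqn:H; last by exfalso; move: H; lia.
have E : forall q (e : q = n.+1), \prod_(i < q) A (- (n%:Z) + i%:Z) = \prod_(i < n.+1) A (- (n%:Z) + i%:Z) by move=> q ->.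
apply: E; lia.
Qed.

Lemma zprod_negn (F : fieldType) (A : int -> F) (n : nat) :
  zprod A 1 (- (n%:Z) - 1) = (zprod A (- (n%:Z)) 0)^-1.
Proof.
rewrite (_ : - (n%:Z) - 1 = Negz n); last by lia.
rewrite zprod_neg zprod_0; congr (_^-1); apply: eq_bigr => i _; congr (A _); lia.
Qed.

Lemma zsum_tele' (V : zmodType) (T P : int -> V) (lo hi : int) :
  lo <= hi + 1 ->
  (forall k, lo <= k <= hi -> T k = P k - P (k - 1)) ->
  zsum T lo hi = P hi - P (lo - 1).
Proof.
move=> Hle H; rewrite /zsum (@zsum_tele _ T P).
  by congr (P _ - P _); lia.
move=> i Hi; apply: H; lia.
Qed.

Theorem theorem3p1 (R : realType) (f g : R[i] -> R[i] -> R[i])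
    (a b c d : int -> R[i]) (m n : nat) :
  perp f g ->
  (forall j : int, - (n%:Z) <= j <= m%:Z ->
     [/\ f (a j) (c j) != 0, f (a j) (d j) != 0,
         g (b j) (c j) != 0 & g (b j) (d j) != 0]) ->
  zsum (fun k : int =>
          f (a k) (b k) * g (c k) (d k)
          * (zprod (fun j => f (a j) (c j)) 1 (k - 1)
             / zprod (fun j => f (a j) (d j)) 1 k)
          * (zprod (fun j => g (b j) (d j)) 1 (k - 1)
             / zprod (fun j => g (b j) (c j)) 1 k))
       (- (n%:Z)) (m%:Z)
  = (zprod (fun j => f (a j) (c j)) 1 m%:Z
       / zprod (fun j => f (a j) (d j)) 1 m%:Z)
    * (zprod (fun j => g (b j) (d j)) 1 m%:Z
       / zprod (fun j => g (b j) (c j)) 1 m%:Z)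
    - (zprod (fun j => f (a j) (d j)) (- (n%:Z)) 0
       / zprod (fun j => f (a j) (c j)) (- (n%:Z)) 0)
      * (zprod (fun j => g (b j) (c j)) (- (n%:Z)) 0
       / zprod (fun j => g (b j) (d j)) (- (n%:Z)) 0).
Proof.
move=> Hp Hnz.
pose P := fun k : int =>
  zprod (fun j => f (a j) (c j)) 1 k / zprod (fun j => f (a j) (d j)) 1 k
  * (zprod (fun j => g (b j) (d j)) 1 k / zprod (fun j => g (b j) (c j)) 1 k).
apply: etrans.
  apply: (@zsum_tele' _ _ P); first lia.
  move=> k Hk.
  case: (Hnz k Hk) => h1 h2 h3 h4.
  rewrite /P (@zprod_recr _ (fun j => f (a j) (c j)) _ h1)
    (@zprod_recr _ (fun j => f (a j) (d j)) _ h2)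
    (@zprod_recr _ (fun j => g (b j) (c j)) _ h3)
    (@zprod_recr _ (fun j => g (b j) (d j)) _ h4).
  have e : f (a k) (b k) * g (c k) (d k)
     = f (a k) (c k) * g (b k) (d k) - f (a k) (d k) * g (b k) (c k).
    by rewrite -[LHS]subr0 -(Hp (b k) (c k) (d k) (a k)); ring.
  by rewrite e alg.
congr (_ - _).
rewrite /P !zprod_negn !invrK.
by rewrite [_^-1 * _]mulrC [(zprod (fun j => g (b j) (d j)) _ _)^-1 * _]mulrC.
Qed.
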